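(* Let $\tau\in(0,\frac{\pi}{4})\cup(\frac{\pi}{4},\frac{\pi}{2})$, $a=\cot\tau$, $b=\sqrt{|\cot^2\tau-1|}$, and let $F=F_\tau$ be defined on symmetric matrices with eigenvalues $\lambda_1\le\dots\le\lambda_n$ by $F_\tau=\sum_i\ln\big(\frac{\lambda_i+a-b}{\lambda_i+a+b}\big)$ if $0<\tau<\frac{\pi}{4}$ and $F_\tau=\sum_i\arctan\big(\frac{\lambda_i+a-b}{\lambda_i+a+b}\big)$ if $\frac{\pi}{4}<\tau<\frac{\pi}{2}$. Then $F_\tau$ satisfies all of the following: (i) $F_\tau$ is monotonically increasing in each $\lambda_i$ (so $\partial F_\tau/\partial\lambda_i>0$) and is a symmetric function of $(\lambda_1,\dots,\lambda_n)$, i.e. invariant under interchange of any two eigenvalues; (ii) for any $\mu_1>0,\mu_2>0$ there exist positive constants $\lambda,\Lambda$ depending only on $\mu_1,\mu_2$ (and $\tau,n$) such that for every $(\lambda_1,\dots,\lambda_n)\in\Gamma^+_{]\mu_1,\mu_2[}$, $$\Lambda\ge\sum_{i=1}^n\frac{\partial F_\tau}{\partial\lambda_i}\ge\lambda\qquad\text{and}\qquad \Lambda\ge\sum_{i=1}^n\frac{\partial F_\tau}{\partial\lambda_i}\lambda_i^2\ge\lambda;$$ (iii) both $F_\tau(A)$ and $F_\tau^*(A):=-F_\tau(A^{-1})$ are concave on the cone $\Gamma_+$ of positive definite symmetric matrices; (iv) there exist functions $f_1,f_2$, monotonically increasing on $(0,+\infty)$, with $f_1(\lambda_1)\le F_\tau(\lambda_1,\dots,\lambda_n)\le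 f_2(\lambda_n)$ for all $0\le\lambda_1\le\dots\le\lambda_n$ (for which $F_\tau$ is defined), and such that for every $\Phi,\Psi\in\mathcal{L}$ there exist $t_1>0$ and $t_2>0$ with: every $t>0$ satisfying $f_1(t)\le\Phi$ has $t\le t_1$, and every $t>0$ satisfying $f_2(t)\ge\Psi$ has $t\ge t_2$.
   Context: $\Gamma^+_{]\mu_1,\mu_2[}=\{(\lambda_1,\dots,\lambda_n):0\le\lambda_1\le\lambda_2\le\dots\le\lambda_n,\ \lambda_1\le\mu_1,\ \lambda_n\ge\mu_2\}$. $\mathcal{L}=\{\Upsilon:\ \exists\,0<\lambda_1\le\dots\le\lambda_n\text{ with }\Upsilon=F_\tau(\lambda_1,\dots,\lambda_n)\}$, the set of values of $F_\tau$ on positive eigenvalue vectors. $F_\tau(A)$ for a symmetric matrix means $F_\tau$ evaluated at its ordered eigenvalues. *)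

(* Defs.v *)
(* classical reals (ln, atan, derivatives). Matrices are
   hand-rolled as functions nat -> nat -> R restricted to indices < n. *)
From Stdlib Require Import Reals Lra Lia.
Open Scope R_scope.

Fixpoint rsum (n : nat) (f : nat -> R) : R :=
  match n with O => 0 | S m => rsum m f + f m end.

Definition a_tau (tau : R) : R := cos tau / sin tau.
Definition b_tau (tau : R) : R := sqrt (Rabs (a_tau tau ^ 2 - 1)).

Definition g_tau (tau x : R) : R :=
  let a := a_tau tau in let b := b_tau tau in
  if Rlt_dec tau (PI / 4) then ln ((x + a - b) / (x + a + b))
  else atan ((x + a - b) / (x + a + b)).

Definition F_tau (tau : R) (n : nat) (lam : nat -> R) : R :=
  rsum n (fun i => g_tau tau (lam i)).

Definition upd (lam : nat -> R) (i : nat) (x : R) : nat -> R :=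
  fun j => if Nat.eq_dec j i then x else lam j.

Definition swap (lam : nat -> R) (i j : nat) : nat -> R :=
  fun k => if Nat.eq_dec k i then lam j else if Nat.eq_dec k j then lam i else lam k.

Definition partial_F (tau : R) (n : nat) (lam : nat -> R) (i : nat) (d : R) : Prop :=
  derivable_pt_lim (fun x => F_tau tau n (upd lam i x)) (lam i) d.

Definition ordered (n : nat) (lam : nat -> R) : Prop :=
  forall i j, (i <= j)%nat -> (j < n)%nat -> lam i <= lam j.

(* Gamma^+_{]mu1,mu2[} (indices shifted: lam_1 = lam 0, lam_n = lam (n-1)) *)
Definition Gamma_mu (n : nat) (mu1 mu2 : R) (lam : nat -> R) : Prop :=
  ordered n lam /\ 0 <= lam 0%nat /\ lam 0%nat <= mu1 /\ mu2 <= lam (n - 1)%nat.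

Definition L_set (tau : R) (n : nat) (Y : R) : Prop :=
  exists lam, ordered n lam /\ (forall i, (i < n)%nat -> 0 < lam i) /\ Y = F_tau tau n lam.

Definition mat := nat -> nat -> R.
Definition mmul (n : nat) (A B : mat) : mat := fun i j => rsum n (fun k => A i k * B k j).
Definition mtr (A : mat) : mat := fun i j => A j i.
Definition idm : mat := fun i j => if Nat.eq_dec i j then 1 else 0.
Definition diagm (lam : nat -> R) : mat := fun i j => if Nat.eq_dec i j then lam i else 0.
Definition meq (n : nat) (A B : mat) : Prop :=
  forall i j, (i < n)%nat -> (j < n)%nat -> A i j = B i j.
Definition msym (n : nat) (A : mat) : Prop :=
  forall i j, (i < n)%nat -> (j < n)%nat -> A i j = A j i.
Definition posdef (n : nat) (A : mat) : Prop :=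
  msym n A /\
  forall x : nat -> R, (exists i, (i < n)%nat /\ x i <> 0) ->
    0 < rsum n (fun i => rsum n (fun j => x i * A i j * x j)).
Definition orthogonal (n : nat) (Q : mat) : Prop := meq n (mmul n (mtr Q) Q) idm.
Definition eigvals (n : nat) (A : mat) (lam : nat -> R) : Prop :=
  ordered n lam /\
  exists Q, orthogonal n Q /\ meq n A (mmul n (mmul n Q (diagm lam)) (mtr Q)).
Definition minv (n : nat) (A B : mat) : Prop := meq n (mmul n A B) idm.
Definition mcomb (t : R) (A B : mat) : mat := fun i j => t * A i j + (1 - t) * B i j.

(* Main.v *)
Require Import Defs.
From Stdlib Require Import Reals Lra Lia Ratan FunctionalExtensionality.
Open Scope R_scope.
From Coquelicot Require Coquelicot.
From mathcomp Require all_boot all_algebra Rstruct.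

Module AN.
Import Coquelicot.Coquelicot.

Definition Dd (a x : R) := x^2 + 2*a*x + 1.
Definition gp (a c x : R) := c / Dd a x.
Definition Gok (g : R -> R) (a c : R) :=
  0 < a /\ 0 < c /\ forall x, 0 <= x -> derivable_pt_lim g x (gp a c x).

Lemma Dd_pos a x : 0 < a -> 0 <= x -> 1 <= Dd a x.
Proof. intros; unfold Dd; nra. Qed.

Lemma gp_pos a c x : 0 < a -> 0 < c -> 0 <= x -> 0 < gp a c x.
Proof. intros. unfold gp. pose proof (Dd_pos a x H H1).
  apply Rdiv_lt_0_compat; lra. Qed.

Lemma gp_dec a c x y : 0 < a -> 0 < c -> 0 <= x <= y -> gp a c y <= gp a c x.
Proof. intros. unfold gp. pose proof (Dd_pos a x H (proj1 H1)).
  assert (Dd a x <= Dd a y) by (unfold Dd; nra).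
  unfold Rdiv. apply Rmult_le_compat_l; [lra|]. apply Rinv_le_contravar; lra. Qed.

Lemma gp_le a c x : 0 < a -> 0 < c -> 0 <= x -> gp a c x <= c.
Proof. intros. pose proof (gp_dec a c 0 x H H0 (conj (Rle_refl 0) H1)).
  unfold gp, Dd in *. replace (0^2 + 2*a*0+1) with 1 in H2 by ring. lra. Qed.

Lemma gpx2_le a c x : 0 < a -> 0 < c -> 0 <= x -> gp a c x * x^2 <= c.
Proof. intros. unfold gp. pose proof (Dd_pos a x H H1).
  apply (Rmult_le_reg_r (Dd a x)); [lra|].
  unfold Rdiv. replace (c * / Dd a x * x ^ 2 * Dd a x) with (c * x^2) by (field; lra).
  unfold Dd. assert (0 <= c * (2*a*x+1)) by (apply Rmult_le_pos; nra). nra. Qed.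

Lemma gpx2_mono a c m x : 0 < a -> 0 < c -> 0 < m <= x -> gp a c m * m^2 <= gp a c x * x^2.
Proof. intros. unfold gp. assert (0<=m) by lra. assert (0<=x) by lra.
  pose proof (Dd_pos a x H H3). pose proof (Dd_pos a m H H2).
  unfold Rdiv. rewrite !Rmult_assoc. apply Rmult_le_compat_l; [lra|].
  apply (Rmult_le_reg_r (Dd a x)); [lra|].
  apply (Rmult_le_reg_r (Dd a m)); [lra|].
  replace (/ Dd a m * m ^ 2 * Dd a x * Dd a m) with (m^2 * Dd a x) by (field; lra).
  replace (/ Dd a x * x ^ 2 * Dd a x * Dd a m) with (x^2 * Dd a m) by (field; lra).
  unfold Dd. assert (0 <= x - m) by lra.
  assert (0 <= a*x*m*(x-m)) by (apply Rmult_le_pos; [|lra]; apply Rmult_le_pos; [|lra]; apply Rmult_le_pos; lra).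
  nra. Qed.

Lemma g_strict g a c x y : Gok g a c -> 0 <= x -> x < y -> g x < g y.
Proof. intros [Ha [Hc Hd]] Hx Hxy.
  destruct (MVT_cor2 g (gp a c) x y Hxy) as [z [Hz1 Hz2]].
  { intros z Hz. apply Hd. lra. }
  assert (0 < gp a c z) by (apply gp_pos; lra).
  assert (0 < gp a c z * (y - x)) by (apply Rmult_lt_0_compat; lra). lra. Qed.

Lemma g_mono g a c x y : Gok g a c -> 0 <= x -> x <= y -> g x <= g y.
Proof. intros. destruct (Req_dec x y). subst; lra.
  left; apply (g_strict g a c); auto; lra. Qed.

Lemma g_tangent g a c x y : Gok g a c -> 0 <= x -> 0 <= y -> g y <= g x + gp a c x * (y - x).
Proof. intros HG Hx Hy. destruct HG as [Ha [Hc Hd]].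
  destruct (Rtotal_order x y) as [Hxy|[Hxy|Hxy]].
  - destruct (MVT_cor2 g (gp a c) x y Hxy) as [z [Hz1 Hz2]].
    { intros z Hz. apply Hd. lra. }
    assert (gp a c z <= gp a c x) by (apply gp_dec; lra).
    assert (gp a c z * (y - x) <= gp a c x * (y-x)) by (apply Rmult_le_compat_r; lra). lra.
  - subst. lra.
  - destruct (MVT_cor2 g (gp a c) y x Hxy) as [z [Hz1 Hz2]].
    { intros z Hz. apply Hd. lra. }
    assert (gp a c x <= gp a c z) by (apply gp_dec; lra).
    assert (gp a c x * (x - y) <= gp a c z * (x-y)) by (apply Rmult_le_compat_r; lra). lra.
Qed.

Lemma g_dual_deriv g a c z : Gok g a c -> 0 < z ->
  derivable_pt_lim (fun y => g y + g (/ y)) z 0.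
Proof. intros HG Hz. destruct HG as [Ha [Hc Hd]].
  assert (Hi : derivable_pt_lim (fun y => / y) z (- / z^2)).
  { apply is_derive_Reals. auto_derive. lra. field. lra. }
  assert (H2 : derivable_pt_lim (comp g (fun y => / y)) z (gp a c (/z) * (- / z^2))).
  { apply derivable_pt_lim_comp. exact Hi. apply Hd. left. apply Rinv_0_lt_compat; lra. }
  assert (H1 := Hd z (Rlt_le _ _ Hz)).
  pose proof (derivable_pt_lim_plus _ _ _ _ _ H1 H2) as H3.
  replace 0 with (gp a c z + gp a c (/ z) * - / z ^ 2).
  exact H3.
  unfold gp, Dd. assert (0 < z^2 + 2*a*z+1) by nra. field. split; [lra|nra].
  Qed.
Lemma dummy : True. Proof.
  exact I. Qed.

Lemma g_dual g a c x : Gok g a c -> 0 < x -> g x + g (/ x) = g 1 + g 1.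
Proof. intros HG Hx.
  set (k := fun y => g y + g (/ y)).
  enough (k x = k 1) by (unfold k in *; rewrite Rinv_1 in *; lra).
  destruct (Rtotal_order x 1) as [H|[H|H]].
  - destruct (MVT_cor2 k (fun _ => 0) x 1 H) as [z [Hz1 Hz2]].
    { intros z Hz. apply (g_dual_deriv g a c); auto; lra. }
    lra.
  - subst; reflexivity.
  - destruct (MVT_cor2 k (fun _ => 0) 1 x H) as [z [Hz1 Hz2]].
    { intros z Hz. apply (g_dual_deriv g a c); auto; lra. }
    lra.
Qed.

End AN.
Import AN.


Lemma rsum_ext n f g : (forall k, (k < n)%nat -> f k = g k) -> rsum n f = rsum n g.
Proof. induction n; simpl; intros; auto. rewrite IHn by (intros; apply H; lia). rewrite H by lia. auto. Qed.

Lemma rsum_le n f g : (forall k, (k < n)%nat -> f k <= g k) -> rsum n f <= rsum n g.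
Proof. induction n; simpl; intros; [lra|]. assert (rsum n f <= rsum n g) by (apply IHn; intros; apply H; lia).
  assert (f n <= g n) by (apply H; lia). lra. Qed.

Lemma rsum_plus n f g : rsum n (fun k => f k + g k) = rsum n f + rsum n g.
Proof. induction n; simpl; [lra|]. rewrite IHn. lra. Qed.

Lemma rsum_scal n c f : rsum n (fun k => c * f k) = c * rsum n f.
Proof. induction n; simpl; [lra|]. rewrite IHn. lra. Qed.

Lemma rsum_const n c : rsum n (fun _ => c) = INR n * c.
Proof. induction n; simpl rsum; [simpl; lra|]. rewrite IHn, S_INR. lra. Qed.

Lemma rsum_swap n m (f : nat -> nat -> R) :
  rsum n (fun i => rsum m (fun k => f i k)) = rsum m (fun k => rsum n (fun i => f i k)).
Proof. induction n; simpl.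
  - induction m; simpl; [lra|]. rewrite <- IHm. lra.
  - rewrite IHn. rewrite <- rsum_plus. reflexivity. Qed.

Lemma rsum_nonneg n f : (forall k, (k < n)%nat -> 0 <= f k) -> 0 <= rsum n f.
Proof. intros. replace 0 with (rsum n (fun _ => 0)). apply rsum_le; auto.
  rewrite rsum_const; ring. Qed.

Lemma rsum_ge_term n f j : (forall k, (k < n)%nat -> 0 <= f k) -> (j < n)%nat -> f j <= rsum n f.
Proof. induction n; intros; [lia|]. simpl.
  destruct (Nat.eq_dec j n).
  - subst. assert (0 <= rsum n f) by (apply rsum_nonneg; intros; apply H; lia). lra.
  - assert (f j <= rsum n f) by (apply IHn; [intros; apply H|]; lia).
    assert (0 <= f n) by (apply H; lia). lra. Qed.

Lemma rsum_delta n c j : (j < n)%nat ->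
  rsum n (fun k => (if Nat.eq_dec k j then 1 else 0) * c k) = c j.
Proof. induction n; intros; [lia|]. simpl.
  destruct (Nat.eq_dec n j).
  - subst. rewrite (rsum_ext _ _ (fun _ => 0)). rewrite rsum_const. ring.
    intros. destruct (Nat.eq_dec k j); [lia|ring].
  - rewrite IHn by lia. ring. Qed.

Lemma rsum_upd (G : R -> R) n f j y : (j < n)%nat ->
  rsum n (fun k => G (upd f j y k)) = rsum n (fun k => G (f k)) - G (f j) + G y.
Proof. induction n; intros; [lia|]. simpl.
  destruct (Nat.eq_dec j n).
  - subst. rewrite (rsum_ext n _ (fun k => G (f k))).
    unfold upd. destruct (Nat.eq_dec n n); [|lia]. ring.
    intros. unfold upd. destruct (Nat.eq_dec k n); [lia|auto].
  - rewrite IHn by lia. unfold upd. destruct (Nat.eq_dec n j); [lia|]. ring. Qed.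

Lemma rsum_pos_exists n f : (forall k, (k < n)%nat -> f k = 0) -> rsum n f = 0.
Proof. intros. rewrite (rsum_ext _ _ (fun _ => 0)) by auto. rewrite rsum_const; ring. Qed.

Lemma jensen (phi phi' : R -> R) n (S : nat -> nat -> R) (al av : nat -> R) :
  (forall x y, 0 < x -> 0 < y -> phi y <= phi x + phi' x * (y - x)) ->
  (forall k, (k < n)%nat -> 0 < al k) -> (forall i, (i < n)%nat -> 0 < av i) ->
  (forall i k, (i < n)%nat -> (k < n)%nat -> 0 <= S i k) ->
  (forall i, (i < n)%nat -> rsum n (fun k => S i k) = 1) ->
  (forall k, (k < n)%nat -> rsum n (fun i => S i k) = 1) ->
  (forall i, (i < n)%nat -> av i = rsum n (fun k => S i k * al k)) ->
  rsum n (fun k => phi (al k)) <= rsum n (fun i => phi (av i)).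
Proof. intros Ht Hal Hav HS HS1 HS2 Ha.
  apply Rle_trans with (rsum n (fun i => rsum n (fun k => S i k * phi (al k)))).
  - rewrite rsum_swap. apply Req_le. apply rsum_ext. intros k Hk.
    replace (rsum n (fun i => S i k * phi (al k))) with (phi (al k) * rsum n (fun i => S i k)).
    rewrite HS2 by auto. ring. rewrite <- rsum_scal. apply rsum_ext; intros; ring.
  - apply rsum_le. intros i Hi.
    apply Rle_trans with (rsum n (fun k => phi (av i) * S i k + phi' (av i) * (S i k * al k) + (- (phi' (av i) * av i)) * S i k)).
    + apply rsum_le. intros k Hk.
      pose proof (Ht (av i) (al k) (Hav i Hi) (Hal k Hk)).
      pose proof (HS i k Hi Hk).
      replace (phi (av i) * S i k + phi' (av i) * (S i k * al k) + - (phi' (av i) * av i) * S i k)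
        with (S i k * (phi (av i) + phi' (av i) * (al k - av i))) by ring.
      apply Rmult_le_compat_l; auto.
    + rewrite !rsum_plus, !rsum_scal. rewrite HS1 by auto. rewrite <- Ha by auto. lra.
Qed.


Module MX.
Import all_boot all_algebra Rstruct.
Import GRing.Theory.
Local Open Scope ring_scope.
Local Set Implicit Arguments.

Lemma rsum_big n (f : nat -> R) : rsum n f = \sum_(k < n) f k.
Proof. elim: n => [|n IH] /=; first by rewrite big_ord0. by rewrite big_ord_recr /= IH. Qed.

Definition mx n (M : mat) : 'M[R]_n := \matrix_(i < n, j < n) M i j.

Lemma meq_mx n A B : meq n A B -> mx n A = mx n B.
Proof. move=> H; apply/matrixP=> i j; rewrite !mxE; apply: H; apply/ltP; exact: ltn_ord. Qed.

Lemma mx_meq n A B : mx n A = mx n B -> meq n A B.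
Proof. move=> H i j /ltP Hi /ltP Hj.
  have := congr1 (fun M : 'M[R]_n => M (Ordinal Hi) (Ordinal Hj)) H.
  by rewrite /= !mxE. Qed.

Lemma mx_mmul n A B : mx n (mmul n A B) = mx n A *m mx n B.
Proof. apply/matrixP=> i j; rewrite !mxE /mmul rsum_big; apply: eq_bigr => k _; by rewrite !mxE. Qed.

Lemma mx_mtr n A : mx n (mtr A) = (mx n A)^T.
Proof. by apply/matrixP=> i j; rewrite !mxE. Qed.

Lemma mx_idm n : mx n idm = 1%:M.
Proof. apply/matrixP=> i j; rewrite !mxE /idm.
  case: (Nat.eq_dec i j) => [e|ne].
  - have -> : i = j by apply: val_inj. by rewrite eqxx.
  - have -> : (i == j) = false by apply/eqP => e; apply: ne; rewrite e. by []. Qed.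

Lemma mx_diagm n lam : mx n (diagm lam) = diag_mx (\row_(j < n) lam j).
Proof. apply/matrixP=> i j; rewrite !mxE /diagm.
  case: (Nat.eq_dec i j) => [e|ne].
  - have -> : i = j by apply: val_inj. by rewrite eqxx.
  - have -> : (i == j) = false by apply/eqP => e; apply: ne; rewrite e. by []. Qed.

Lemma orth_right n Q : Defs.orthogonal n Q -> meq n (mmul n Q (mtr Q)) idm.
Proof. move=> /meq_mx; rewrite mx_mmul mx_mtr mx_idm => H.
  apply: mx_meq; rewrite mx_mmul mx_mtr mx_idm. exact: mulmx1C. Qed.
Lemma W_orth n Q V : Defs.orthogonal n Q -> Defs.orthogonal n V ->
  meq n (mmul n (mtr (mmul n (mtr Q) V)) (mmul n (mtr Q) V)) idm /\
  meq n (mmul n (mmul n (mtr Q) V) (mtr (mmul n (mtr Q) V))) idm.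
Proof. move=> HQ HV.
  have HQ2 : mx n Q *m (mx n Q)^T = 1%:M.
    by rewrite -mx_idm -mx_mtr -mx_mmul; apply: meq_mx; apply: orth_right.
  have HV2 : mx n V *m (mx n V)^T = 1%:M.
    by rewrite -mx_idm -mx_mtr -mx_mmul; apply: meq_mx; apply: orth_right.
  have HQ1 : (mx n Q)^T *m mx n Q = 1%:M.
    by rewrite -mx_idm -mx_mtr -mx_mmul; apply: meq_mx.
  have HV1 : (mx n V)^T *m mx n V = 1%:M.
    by rewrite -mx_idm -mx_mtr -mx_mmul; apply: meq_mx.
  split; apply: mx_meq.
  - rewrite mx_mmul mx_mtr mx_idm (mx_mmul n (mtr Q) V) (mx_mtr n Q) trmx_mul trmxK.
    by rewrite !mulmxA -(mulmxA _ (mx n Q)) HQ2 mulmx1 HV1.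
  - rewrite mx_mmul (mx_mtr n (mmul n (mtr Q) V)) mx_idm (mx_mmul n (mtr Q) V) (mx_mtr n Q) trmx_mul trmxK.
    by rewrite !mulmxA -(mulmxA _ (mx n V)) HV2 mulmx1 HQ1.
Qed.
Lemma quad_mx n A Q V al :
  meq n A (mmul n (mmul n Q (diagm al)) (mtr Q)) ->
  meq n (mmul n (mmul n (mtr V) A) V)
        (mmul n (mmul n (mtr (mmul n (mtr Q) V)) (diagm al)) (mmul n (mtr Q) V)).
Proof. move=> HA.
  have HA' : mx n A = mx n Q *m diag_mx (\row_(j < n) al j) *m (mx n Q)^T.
    by rewrite -mx_diagm -mx_mtr -!mx_mmul; apply: meq_mx.
  apply: mx_meq.
  rewrite (mx_mmul n (mmul n (mtr V) A) V) (mx_mmul n (mtr V) A) (mx_mtr n V) HA'.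
  rewrite (mx_mmul n (mmul n (mtr (mmul n (mtr Q) V)) (diagm al)) (mmul n (mtr Q) V)).
  rewrite (mx_mmul n (mtr (mmul n (mtr Q) V)) (diagm al)) (mx_mtr n (mmul n (mtr Q) V)).
  rewrite (mx_mmul n (mtr Q) V) (mx_mtr n Q) mx_diagm trmx_mul trmxK.
  by rewrite !mulmxA. Qed.

Lemma inv_decomp n A Ai Q lam : Defs.orthogonal n Q ->
  meq n Ai (mmul n (mmul n Q (diagm lam)) (mtr Q)) -> minv n A Ai ->
  (forall k, lt k n -> lam k <> 0%R) /\
  meq n A (mmul n (mmul n Q (diagm (fun k => / lam k))) (mtr Q)).
Proof. move=> HQ HAi HA.
  have HQ2 : mx n Q *m (mx n Q)^T = 1%:M.
    by rewrite -mx_idm -mx_mtr -mx_mmul; apply: meq_mx; apply: orth_right.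
  have HQ1 : (mx n Q)^T *m mx n Q = 1%:M.
    by rewrite -mx_idm -mx_mtr -mx_mmul; apply: meq_mx.
  have HAi' : mx n Ai = mx n Q *m diag_mx (\row_(j < n) lam j) *m (mx n Q)^T.
    by rewrite -mx_diagm -mx_mtr -!mx_mmul; apply: meq_mx.
  have HA' : mx n A *m mx n Ai = 1%:M.
    by rewrite -mx_idm -mx_mmul; apply: meq_mx.
  have Hnz : forall k : 'I_n, lam k != 0.
    have := congr1 determinant HA'. rewrite det_mulmx HAi' !det_mulmx det_tr det_diag det1.
    move=> Hd. have : \prod_(i < n) (\row_j lam j) 0 i != 0.
      apply/eqP => H0. move: Hd. rewrite H0 mulr0 mul0r mulr0. move/eqP. by rewrite eq_sym oner_eq0.
    move/prodf_neq0 => Hp k. have := Hp k isT. by rewrite mxE.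
  split.
  - move=> k /ltP Hk. have := Hnz (Ordinal Hk). by move/eqP.
  - apply: mx_meq.
    rewrite (mx_mmul n (mmul n Q (diagm (fun k => / lam k))) (mtr Q)).
    rewrite (mx_mmul n Q (diagm (fun k => / lam k))) (mx_mtr n Q) mx_diagm.
    set N := (mx n Q *m diag_mx (\row_j0 (/ lam j0)%R) *m (mx n Q)^T).
    have HN : mx n Ai *m N = 1%:M.
      rewrite HAi' /N !mulmxA -(mulmxA (mx n Q *m diag_mx (\row_j lam j)) ((mx n Q)^T) (mx n Q)) HQ1 mulmx1.
      rewrite -(mulmxA (mx n Q) (diag_mx (\row_j lam j))).
      have -> : diag_mx (\row_j lam j) *m diag_mx (\row_j0 (/ lam j0)%R) = 1%:M :> 'M[R]_n.
        apply/matrixP => i j. rewrite mul_diag_mx !mxE.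
        case: (eqVneq i j) => [->|ne].
        + rewrite mulr1n. apply: Rinv_r. apply/eqP. exact: Hnz.
        + by rewrite mulr0n mulr0.
      by rewrite mulmx1 HQ2.
    by rewrite -[mx n A]mulmx1 -HN mulmxA HA' mul1mx.
Qed.
End MX.



Definition quad n (M : mat) (x : nat -> R) := rsum n (fun p => rsum n (fun q => x p * M p q * x q)).

Lemma rsum_scal_r n f c : rsum n f * c = rsum n (fun k => f k * c).
Proof. rewrite Rmult_comm, <- rsum_scal. apply rsum_ext; intros; ring. Qed.

Lemma diag_collapse n f al k : (k < n)%nat ->
  rsum n (fun j => f j * diagm al j k) = f k * al k.
Proof. induction n; intros; [lia|]. simpl.
  destruct (Nat.eq_dec n k).
  - subst. rewrite (rsum_ext _ _ (fun _ => 0)). rewrite rsum_const.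
    unfold diagm. destruct (Nat.eq_dec k k); [ring|lia].
    intros. unfold diagm. destruct (Nat.eq_dec k0 k); [lia|ring].
  - rewrite IHn by lia. unfold diagm. destruct (Nat.eq_dec n k); [lia|ring]. Qed.

Lemma decomp_quad n A Q V al i : (i < n)%nat ->
  meq n A (mmul n (mmul n Q (diagm al)) (mtr Q)) ->
  quad n A (fun p => V p i) =
  rsum n (fun k => mmul n (mtr Q) V k i * al k * mmul n (mtr Q) V k i).
Proof. intros Hi HA. pose proof (@MX.quad_mx n A Q V al HA i i Hi Hi) as H.
  unfold quad. rewrite rsum_swap.
  transitivity (mmul n (mmul n (mtr V) A) V i i).
  - unfold mmul at 1. apply rsum_ext. intros q Hq. unfold mmul, mtr. rewrite rsum_scal_r.
    apply rsum_ext. intros p Hp. reflexivity.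
  - rewrite H. unfold mmul at 1. apply rsum_ext. intros k Hk.
    unfold mmul at 1. rewrite diag_collapse by auto. unfold mtr. reflexivity.
Qed.

Lemma rsum_one_nz n f : rsum n f = 1 -> exists p, (p < n)%nat /\ f p <> 0.
Proof. induction n; simpl; intros. lra.
  destruct (Req_dec (f n) 0).
  - destruct IHn as [p [Hp Hf]]. lra. exists p; split; auto; lia.
  - exists n; split; auto. Qed.

Lemma col_nz n Q k : Defs.orthogonal n Q -> (k < n)%nat -> exists p, (p < n)%nat /\ Q p k <> 0.
Proof. intros HQ Hk. pose proof (HQ k k Hk Hk) as H. unfold mmul, mtr, idm in H.
  destruct (Nat.eq_dec k k); [|lia].
  destruct (rsum_one_nz _ _ H) as [p [Hp Hf]]. exists p; split; auto.
  intro E; apply Hf; rewrite E; ring. Qed.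

Lemma quad_orth_self n A V ga i : (i < n)%nat -> Defs.orthogonal n V ->
  meq n A (mmul n (mmul n V (diagm ga)) (mtr V)) ->
  quad n A (fun p => V p i) = ga i.
Proof. intros Hi HV HA. rewrite (decomp_quad n A V V ga i Hi HA).
  rewrite (rsum_ext _ _ (fun k => (if Nat.eq_dec k i then 1 else 0) * ga k)).
  apply rsum_delta; auto.
  intros k Hk. rewrite (HV k i Hk Hi). unfold idm.
  destruct (Nat.eq_dec k i); ring. Qed.

Lemma posdef_col n A V i : posdef n A -> Defs.orthogonal n V -> (i < n)%nat ->
  0 < quad n A (fun p => V p i).
Proof. intros [_ HA] HV Hi. apply HA. destruct (col_nz n V i HV Hi) as [p [Hp H]].
  exists p; auto. Qed.

Lemma eig_pos n A Q al : posdef n A -> Defs.orthogonal n Q ->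
  meq n A (mmul n (mmul n Q (diagm al)) (mtr Q)) -> forall k, (k < n)%nat -> 0 < al k.
Proof. intros HA HQ H k Hk. rewrite <- (quad_orth_self n A Q al k Hk HQ H).
  apply posdef_col; auto. Qed.

Lemma quad_comb n t A B x : quad n (mcomb t A B) x = t * quad n A x + (1 - t) * quad n B x.
Proof. unfold quad. rewrite <- !rsum_scal, <- rsum_plus. apply rsum_ext; intros p Hp.
  rewrite <- !rsum_scal, <- rsum_plus. apply rsum_ext; intros q Hq. unfold mcomb. ring. Qed.

Lemma jensen_mat g a c n A Q V al : Gok g a c -> posdef n A ->
  Defs.orthogonal n Q -> Defs.orthogonal n V ->
  meq n A (mmul n (mmul n Q (diagm al)) (mtr Q)) ->
  rsum n (fun k => g (al k)) <= rsum n (fun i => g (quad n A (fun p => V p i))).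
Proof. intros HG HA HQ HV Hd.
  destruct (@MX.W_orth n Q V HQ HV) as [W1 W2].
  set (W := mmul n (mtr Q) V) in *.
  apply (jensen g (gp a c) n (fun i k => W k i * W k i) al).
  - intros x y Hx Hy. apply (g_tangent g a c); auto; lra.
  - apply (eig_pos n A Q); auto.
  - intros i Hi. apply posdef_col; auto.
  - intros i k _ _. nra.
  - intros i Hi. pose proof (W1 i i Hi Hi) as H. unfold mmul at 1, mtr at 1, idm in H.
    destruct (Nat.eq_dec i i); [|lia]. exact H.
  - intros k Hk. pose proof (W2 k k Hk Hk) as H. unfold mmul at 1, mtr at 1, idm in H.
    destruct (Nat.eq_dec k k); [|lia]. exact H.
  - intros i Hi. rewrite (decomp_quad n A Q V al i Hi Hd). fold W.
    apply rsum_ext; intros; ring.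
Qed.

Lemma concave_core g a c n A B t Q P V al be ga :
  Gok g a c -> posdef n A -> posdef n B -> 0 <= t <= 1 ->
  Defs.orthogonal n Q -> Defs.orthogonal n P -> Defs.orthogonal n V ->
  meq n A (mmul n (mmul n Q (diagm al)) (mtr Q)) ->
  meq n B (mmul n (mmul n P (diagm be)) (mtr P)) ->
  meq n (mcomb t A B) (mmul n (mmul n V (diagm ga)) (mtr V)) ->
  t * rsum n (fun k => g (al k)) + (1 - t) * rsum n (fun k => g (be k))
  <= rsum n (fun k => g (ga k)).
Proof. intros HG HA HB Ht HQ HP HV HdA HdB HdC.
  pose proof (jensen_mat g a c n A Q V al HG HA HQ HV HdA) as J1.
  pose proof (jensen_mat g a c n B P V be HG HB HP HV HdB) as J2.
  apply Rle_trans with (t * rsum n (fun i => g (quad n A (fun p => V p i)))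
     + (1 - t) * rsum n (fun i => g (quad n B (fun p => V p i)))).
  { apply Rplus_le_compat; apply Rmult_le_compat_l; lra. }
  rewrite <- !rsum_scal, <- rsum_plus. apply rsum_le. intros i Hi.
  rewrite <- (quad_orth_self n _ V ga i Hi HV HdC), quad_comb.
  set (x := quad n A (fun p => V p i)). set (y := quad n B (fun p => V p i)).
  assert (Hx : 0 < x) by (apply posdef_col; auto).
  assert (Hy : 0 < y) by (apply posdef_col; auto).
  set (m := t * x + (1 - t) * y).
  assert (Hm : 0 <= m) by (unfold m; nra).
  pose proof (g_tangent g a c m x HG Hm (Rlt_le _ _ Hx)).
  pose proof (g_tangent g a c m y HG Hm (Rlt_le _ _ Hy)).
  assert (t * g x <= t * (g m + gp a c m * (x - m))) by (apply Rmult_le_compat_l; lra).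
  assert ((1-t) * g y <= (1-t) * (g m + gp a c m * (y - m))) by (apply Rmult_le_compat_l; lra).
  assert (t * (g m + gp a c m * (x - m)) + (1-t) * (g m + gp a c m * (y - m)) = g m)
    by (unfold m; ring).
  lra.
Qed.


Module PP.
Import Coquelicot.Coquelicot.

Lemma deriv_ln a b x : 0 < b < a -> b * b = a * a - 1 -> 0 <= x ->
  derivable_pt_lim (fun y => ln ((y + a - b) / (y + a + b))) x (gp a (2 * b) x).
Proof. intros Hb Hab Hx. apply is_derive_Reals. auto_derive.
  - split; [lra|]. split; [|exact I]. apply Rmult_lt_0_compat; [lra|]. apply Rinv_0_lt_compat; lra.
  - unfold gp, Dd. replace (x^2 + 2*a*x + 1) with ((x + a - b) * (x + a + b)) by nra.
    field. lra. Qed.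

Lemma deriv_atan a b x : 0 < a -> 0 < b -> b * b = 1 - a * a -> 0 <= x ->
  derivable_pt_lim (fun y => atan ((y + a - b) / (y + a + b))) x (gp a b x).
Proof. intros Ha Hb Hab Hx. apply is_derive_Reals. auto_derive.
  - lra.
  - unfold gp, Dd. replace (x^2 + 2*a*x + 1) with (((x + a - b)^2 + (x + a + b)^2)/2) by nra.
    field. split; [nra|lra]. Qed.

Lemma g_ok tau : 0 < tau < PI / 2 -> tau <> PI / 4 -> exists c, Gok (g_tau tau) (a_tau tau) c.
Proof. intros Ht Ht4.
  assert (Hs : 0 < sin tau) by (apply sin_gt_0; pose proof PI_RGT_0; lra).
  assert (Hc : 0 < cos tau) by (apply cos_gt_0; pose proof PI_RGT_0; lra).
  assert (Ha : 0 < a_tau tau) by (unfold a_tau; apply Rdiv_lt_0_compat; auto).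
  set (a := a_tau tau) in *.
  pose proof PI_RGT_0 as HPI.
  destruct (Rlt_dec tau (PI/4)) as [Hlt|Hge].
  - assert (Htan : tan tau < tan (PI/4)) by (apply tan_increasing; lra).
    rewrite tan_PI4 in Htan. unfold tan in Htan.
    assert (H1 : sin tau < cos tau).
    { apply (Rmult_lt_reg_r (/ cos tau)). apply Rinv_0_lt_compat; auto.
      rewrite Rinv_r by lra. exact Htan. }
    assert (Ha1 : 1 < a).
    { unfold a, a_tau. apply (Rmult_lt_reg_r (sin tau)); auto.
      unfold Rdiv. rewrite Rmult_assoc, Rinv_l by lra. lra. }
    assert (Hb2 : b_tau tau * b_tau tau = a * a - 1).
    { unfold b_tau. fold a. rewrite Rabs_right by nra. rewrite sqrt_sqrt by nra. ring. }
    assert (Hbp : 0 < b_tau tau).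
    { unfold b_tau. apply sqrt_lt_R0. fold a. rewrite Rabs_right by nra. nra. }
    assert (Hba : b_tau tau < a) by nra.
    exists (2 * b_tau tau). split; [auto|]. split; [lra|].
    intros x Hx.
    assert (E : g_tau tau = fun y => ln ((y + a - b_tau tau) / (y + a + b_tau tau))).
    { extensionality y. unfold g_tau. destruct (Rlt_dec tau (PI/4)); [reflexivity|lra]. }
    rewrite E. apply deriv_ln; auto; lra.
  - assert (Hgt : PI/4 < tau) by lra.
    assert (Htan : tan (PI/4) < tan tau) by (apply tan_increasing; lra).
    rewrite tan_PI4 in Htan. unfold tan in Htan.
    assert (H1 : cos tau < sin tau).
    { apply (Rmult_lt_reg_r (/ cos tau)). apply Rinv_0_lt_compat; auto.
      rewrite Rinv_r by lra. exact Htan. }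
    assert (Ha1 : a < 1).
    { unfold a, a_tau. apply (Rmult_lt_reg_r (sin tau)); auto.
      unfold Rdiv. rewrite Rmult_assoc, Rinv_l by lra. lra. }
    assert (Hb2 : b_tau tau * b_tau tau = 1 - a * a).
    { unfold b_tau. fold a. rewrite Rabs_left by nra. rewrite sqrt_sqrt by nra. ring. }
    assert (Hbp : 0 < b_tau tau).
    { unfold b_tau. apply sqrt_lt_R0. fold a. rewrite Rabs_left by nra. nra. }
    exists (b_tau tau). split; [auto|]. split; [lra|].
    intros x Hx.
    assert (E : g_tau tau = fun y => atan ((y + a - b_tau tau) / (y + a + b_tau tau))).
    { extensionality y. unfold g_tau. destruct (Rlt_dec tau (PI/4)); [lra|reflexivity]. }
    rewrite E. apply deriv_atan; auto.
Qed.

End PP.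
Import PP.


Lemma partial_val g a c n lam i : Gok g a c -> (i < n)%nat -> 0 <= lam i ->
  derivable_pt_lim (fun x => rsum n (fun k => g (upd lam i x k))) (lam i) (gp a c (lam i)).
Proof. intros HG Hi Hl.
  assert (E : (fun x => rsum n (fun k => g (upd lam i x k))) =
              (fun x => (rsum n (fun k => g (lam k)) - g (lam i)) + g x)).
  { extensionality x. apply rsum_upd; auto. }
  rewrite E. replace (gp a c (lam i)) with (0 + gp a c (lam i)) by ring.
  apply (derivable_pt_lim_plus (fun _ => rsum n (fun k => g (lam k)) - g (lam i)) g).
  apply derivable_pt_lim_const. destruct HG as [_ [_ Hd]]. apply Hd; auto. Qed.

Lemma ord_nonneg n lam : ordered n lam -> 0 <= lam 0%nat -> forall k, (k < n)%nat -> 0 <= lam k.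
Proof. intros Ho H0 k Hk. pose proof (Ho 0%nat k ltac:(lia) Hk). lra. Qed.

Lemma F_bounds g a c n lam : Gok g a c -> (1 <= n)%nat -> ordered n lam -> 0 <= lam 0%nat ->
  INR n * g (lam 0%nat) <= rsum n (fun k => g (lam k)) <= INR n * g (lam (n - 1)%nat).
Proof. intros HG Hn Ho H0. split.
  - rewrite <- rsum_const. apply rsum_le. intros k Hk. apply (g_mono g a c); auto.
    apply Ho; lia.
  - rewrite <- rsum_const. apply rsum_le. intros k Hk. apply (g_mono g a c).
    auto. apply (ord_nonneg n); auto. apply Ho; lia. Qed.

Lemma posdef_comb n t A B : posdef n A -> posdef n B -> 0 <= t <= 1 -> posdef n (mcomb t A B).
Proof. intros [SA PA] [SB PB] Ht. split.
  - intros i j Hi Hj. unfold mcomb. rewrite SA, SB by auto. ring.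
  - intros x Hx. pose proof (PA x Hx). pose proof (PB x Hx).
    pose proof (quad_comb n t A B x) as E. unfold quad in E. rewrite E.
    destruct (Req_dec t 0). subst. lra. nra. Qed.

Lemma dual_sum g a c n lam : Gok g a c -> (forall k, (k < n)%nat -> 0 < lam k) ->
  rsum n (fun k => g (/ lam k)) = INR n * (g 1 + g 1) - rsum n (fun k => g (lam k)).
Proof. intros HG Hl.
  rewrite (rsum_ext _ _ (fun k => (g 1 + g 1) + (-1) * g (lam k))).
  rewrite rsum_plus, rsum_const, rsum_scal. ring.
  intros k Hk. pose proof (g_dual g a c (lam k) HG (Hl k Hk)). lra. Qed.

Lemma inv_pos_of n lam : (forall k, (k < n)%nat -> lam k <> 0) ->
  (forall k, (k < n)%nat -> 0 < / lam k) -> forall k, (k < n)%nat -> 0 < lam k.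
Proof. intros H1 H2 k Hk. pose proof (H1 k Hk). pose proof (H2 k Hk).
  pose proof (Rinv_r (lam k) H). nra. Qed.

Theorem lemma3p2 (tau : R) (n : nat)
  (Htau : 0 < tau < PI / 2) (Htau4 : tau <> PI / 4) (Hn : (1 <= n)%nat) :
  (* (i) monotonicity (positive partial derivatives) and symmetry *)
  ((forall lam : nat -> R, (forall j, (j < n)%nat -> 0 <= lam j) ->
      forall i, (i < n)%nat ->
        (exists d, partial_F tau n lam i d /\ 0 < d) /\
        (forall x y, 0 <= x -> x < y ->
           F_tau tau n (upd lam i x) < F_tau tau n (upd lam i y))) /\
   (forall lam i j, (i < n)%nat -> (j < n)%nat ->
      F_tau tau n (swap lam i j) = F_tau tau n lam)) /\
  (* (ii) uniform ellipticity-type bounds on Gamma^+_{]mu1,mu2[} *)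
  (forall mu1 mu2, 0 < mu1 -> 0 < mu2 ->
     exists lo hi, 0 < lo /\ 0 < hi /\
       forall lam, Gamma_mu n mu1 mu2 lam ->
       forall d : nat -> R, (forall i, (i < n)%nat -> partial_F tau n lam i (d i)) ->
         lo <= rsum n d <= hi /\
         lo <= rsum n (fun i => d i * lam i ^ 2) <= hi) /\
  (* (iii) concavity of F_tau(A) and F_tau^*(A) = - F_tau(A^{-1}) on Gamma_+ *)
  (forall A B t lamA lamB lamC, posdef n A -> posdef n B -> 0 <= t <= 1 ->
     eigvals n A lamA -> eigvals n B lamB -> eigvals n (mcomb t A B) lamC ->
     t * F_tau tau n lamA + (1 - t) * F_tau tau n lamB <= F_tau tau n lamC) /\
  (forall A B t Ai Bi Ci lamA lamB lamC, posdef n A -> posdef n B -> 0 <= t <= 1 ->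
     minv n A Ai -> minv n B Bi -> minv n (mcomb t A B) Ci ->
     eigvals n Ai lamA -> eigvals n Bi lamB -> eigvals n Ci lamC ->
     t * (- F_tau tau n lamA) + (1 - t) * (- F_tau tau n lamB) <= - F_tau tau n lamC) /\
  (* (iv) *)
  (exists f1 f2 : R -> R,
     (forall x y, 0 < x -> x < y -> f1 x < f1 y) /\
     (forall x y, 0 < x -> x < y -> f2 x < f2 y) /\
     (forall lam, ordered n lam -> 0 <= lam 0%nat ->
        f1 (lam 0%nat) <= F_tau tau n lam <= f2 (lam (n - 1)%nat)) /\
     (forall Phi Psi, L_set tau n Phi -> L_set tau n Psi ->
        exists t1 t2, 0 < t1 /\ 0 < t2 /\
          (forall t, 0 < t -> f1 t <= Phi -> t <= t1) /\
          (forall t, 0 < t -> Psi <= f2 t -> t2 <= t))).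
Proof.
  destruct (g_ok tau Htau Htau4) as [c HG].
  set (a := a_tau tau) in *. set (g := g_tau tau) in *.
  assert (HF : forall lam, F_tau tau n lam = rsum n (fun k => g (lam k))) by reflexivity.
  assert (Hnpos : 0 < INR n) by (apply lt_0_INR; lia).
  destruct HG as [Ha [Hc Hd]] eqn:HGe. clear HGe.
  split; [split|split; [|split; [|split]]].
  -
    intros lam Hlam i Hi. split.
    + exists (gp a c (lam i)). split.
      * unfold partial_F. apply (partial_val g a c); auto.
      * apply gp_pos; auto.
    + intros x y Hx Hxy. rewrite !HF, !rsum_upd by auto.
      pose proof (g_strict g a c x y HG Hx Hxy). lra.
  -
    intros lam i j Hi Hj. rewrite !HF. destruct (Nat.eq_dec i j) as [e|ne].
    + subst. apply rsum_ext. intros k _. unfold swap.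
      destruct (Nat.eq_dec k j); subst; reflexivity.
    + rewrite (rsum_ext n _ (fun k => g (upd (upd lam i (lam j)) j (lam i) k))).
      rewrite rsum_upd by auto. rewrite rsum_upd by auto.
      unfold upd. destruct (Nat.eq_dec j i); [lia|]. ring.
      intros k _. unfold swap, upd.
      destruct (Nat.eq_dec k i), (Nat.eq_dec k j); subst; try lia; reflexivity.
  -
    intros mu1 mu2 H1 H2.
    exists (Rmin (gp a c mu1) (gp a c mu2 * mu2^2)), (INR n * c).
    assert (P1 : 0 < gp a c mu1) by (apply gp_pos; lra).
    assert (P2 : 0 < gp a c mu2 * mu2^2) by (apply Rmult_lt_0_compat; [apply gp_pos; lra|nra]).
    split; [unfold Rmin; destruct (Rle_dec _ _); lra|].
    split; [nra|].
    intros lam [Ho [H0 [Hm1 Hm2]]] d Hdd.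
    assert (Hnn := ord_nonneg n lam Ho H0).
    assert (Deq : forall i, (i < n)%nat -> d i = gp a c (lam i)).
    { intros i Hi. apply (uniqueness_limite (fun x => rsum n (fun k => g (upd lam i x k))) (lam i)).
      apply Hdd; auto. apply (partial_val g a c); auto. }
    pose proof (Rmin_l (gp a c mu1) (gp a c mu2 * mu2^2)).
    pose proof (Rmin_r (gp a c mu1) (gp a c mu2 * mu2^2)).
    split; split.
    + apply Rle_trans with (gp a c mu1); auto.
      apply Rle_trans with (d 0%nat).
      { rewrite Deq by lia. apply gp_dec; auto. }
      apply rsum_ge_term; [|lia]. intros k Hk. rewrite Deq by auto. left; apply gp_pos; auto.
    + rewrite <- rsum_const. apply rsum_le. intros k Hk. rewrite Deq by auto. apply gp_le; auto.
    + apply Rle_trans with (gp a c mu2 * mu2^2); auto.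
      apply Rle_trans with (d (n-1)%nat * lam (n-1)%nat ^ 2).
      { rewrite Deq by lia. apply gpx2_mono; auto. }
      apply (rsum_ge_term n (fun i => d i * lam i ^ 2)); [|lia]. intros k Hk. rewrite Deq by auto.
      apply Rmult_le_pos; [left; apply gp_pos; auto|]. pose proof (Hnn k Hk). nra.
    + rewrite <- rsum_const. apply rsum_le. intros k Hk. rewrite Deq by auto. apply gpx2_le; auto.
  -
    intros A B t lamA lamB lamC HA HB Ht [_ [Q [HQ HdA]]] [_ [P [HP HdB]]] [_ [V [HV HdC]]].
    rewrite !HF. apply (concave_core g a c n A B t Q P V); auto.
  -
    intros A B t Ai Bi Ci lamA lamB lamC HA HB Ht HAi HBi HCi
      [_ [Q [HQ HdA]]] [_ [P [HP HdB]]] [_ [V [HV HdC]]].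
    destruct (MX.inv_decomp HQ HdA HAi) as [nzA HA'].
    destruct (MX.inv_decomp HP HdB HBi) as [nzB HB'].
    destruct (MX.inv_decomp HV HdC HCi) as [nzC HC'].
    assert (HC := posdef_comb n t A B HA HB Ht).
    pose proof (concave_core g a c n A B t Q P V _ _ _ HG HA HB Ht HQ HP HV HA' HB' HC') as K.
    assert (pA := inv_pos_of n lamA nzA (eig_pos n A Q _ HA HQ HA')).
    assert (pB := inv_pos_of n lamB nzB (eig_pos n B P _ HB HP HB')).
    assert (pC := inv_pos_of n lamC nzC (eig_pos n _ V _ HC HV HC')).
    cbv beta in K. rewrite !(dual_sum g a c n) in K by auto.
    rewrite !HF. lra.
  -
    exists (fun x => INR n * g x), (fun x => INR n * g x).
    assert (Mono : forall x y, 0 < x -> x < y -> INR n * g x < INR n * g y).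
    { intros x y Hx Hxy. apply Rmult_lt_compat_l; auto. apply (g_strict g a c); auto; lra. }
    split; [exact Mono|]. split; [exact Mono|]. split.
    + intros lam Ho H0. rewrite HF. apply (F_bounds g a c); auto.
    + intros Phi Psi [l1 [Ho1 [Hp1 E1]]] [l2 [Ho2 [Hp2 E2]]].
      exists (l1 (n-1)%nat), (l2 0%nat).
      assert (Hl1 : 0 < l1 (n-1)%nat) by (apply Hp1; lia).
      assert (Hl2 : 0 < l2 0%nat) by (apply Hp2; lia).
      pose proof (F_bounds g a c n l1 HG Hn Ho1 (Rlt_le _ _ (Hp1 0%nat ltac:(lia)))) as B1.
      pose proof (F_bounds g a c n l2 HG Hn Ho2 (Rlt_le _ _ (Hp2 0%nat ltac:(lia)))) as B2.
      rewrite <- HF in B1, B2. rewrite <- E1 in B1. rewrite <- E2 in B2.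
      split; [auto|]. split; [auto|]. split.
      * intros t Ht Hle. destruct (Rle_dec t (l1 (n-1)%nat)) as [r|r]; auto.
        exfalso. pose proof (Mono (l1 (n-1)%nat) t Hl1 ltac:(lra)). lra.
      * intros t Ht Hle. destruct (Rle_dec (l2 0%nat) t) as [r|r]; auto.
        exfalso. pose proof (Mono t (l2 0%nat) Ht ltac:(lra)). lra.
Qed.
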